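(* Let $U\ge 0$ be a random variable with distribution function $F(z)=P(U\le z)$, and for $p\in[0,1)$ let $\xi_p=\inf\{z\ge 0: F(z)\ge p\}$ denote its $p$-th quantile. Let $w:[0,1]\to[0,1]$ be continuous, nondecreasing, with $w(0)=0$, $w(1)=1$, and Hölder continuous of order $\alpha\in(0,1]$ with constant $H>0$, and suppose there is $\gamma\le\alpha$ with $\int_0^\infty P(U>z)^{\gamma}\,dz<\infty$. Then $$\lim_{n\to\infty}\sum_{i=0}^{n-1}\xi_{i/n}\Big(w\big(\tfrac{n-i}{n}\big)-w\big(\tfrac{n-i-1}{n}\big)\Big)=\int_0^\infty w\big(P(U>z)\big)\,dz<\infty .$$
   Context: A function $f:[0,1]\to\mathbb{R}$ is Hölder continuous of order $\alpha\in(0,1]$ with constant $H>0$ if $|f(x)-f(y)|\le H|x-y|^{\alpha}$ for all $x,y\in[0,1]$. (In the paper this is applied with $U=u^+(X)$, $w=w^+$ and with $U=u^-(X)$, $w=w^-$.) *)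

(* Defs.v *)
From Stdlib Require Import Reals Lra.
Open Scope R_scope.

(* x^y for x >= 0, y > 0, with the convention 0^y = 0 (Stdlib's Rpower 0 y = 1). *)
Definition rpow (x y : R) : R := if Rle_dec x 0 then 0 else Rpower x y.

Definition improper_integral_0_infty (f : R -> R) (l : R) : Prop :=
  exists I : R -> R,
    (forall b, 0 <= b -> exists pr : Riemann_integrable f 0 b, RiemannInt pr = I b) /\
    (forall eps, 0 < eps -> exists M, forall b, M <= b -> Rabs (I b - l) < eps).

Definition nonneg_distribution_function (F : R -> R) : Prop :=
  (forall x y, x <= y -> F x <= F y) /\
  (forall x eps, 0 < eps -> exists d, 0 < d /\ forall y, x <= y < x + d -> Rabs (F y - F x) < eps) /\
  (forall z, z < 0 -> F z = 0) /\
  (forall eps, 0 < eps -> exists M, forall z, M <= z -> Rabs (F z - 1) < eps).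

Definition is_glb (E : R -> Prop) (m : R) : Prop :=
  (forall x, E x -> m <= x) /\ (forall b, (forall x, E x -> b <= x) -> b <= m).

Definition holder_01 (w : R -> R) (alpha H : R) : Prop :=
  forall x y, 0 <= x <= 1 -> 0 <= y <= 1 -> Rabs (w x - w y) <= H * rpow (Rabs (x - y)) alpha.

Definition quantile_sum (xi w : R -> R) (n : nat) : R :=
  sum_f_R0 (fun i => xi (INR i / INR n) *
     (w (INR (n - i) / INR n) - w (INR (n - i - 1) / INR n))) (n - 1).

(* Main.v *)
Require Import Defs.
From Stdlib Require Import Reals Lra Lia RList ZArith Classical.
Open Scope R_scope.

Lemma const_adapted (u : R -> R) x y c : x <= y ->
  (forall t, x < t < y -> u t = c) ->
  adapted_couple u x y (cons x (cons y nil)) (cons c nil).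
Proof.
  intros Hxy Hc; unfold adapted_couple; repeat split.
  - unfold ordered_Rlist; intros; simpl in H; inversion H;
      [ simpl; assumption | elim (Nat.nle_succ_0 _ H1) ].
  - simpl; unfold Rmin; destruct (Rle_dec x y); lra.
  - simpl; unfold Rmax; destruct (Rle_dec x y); lra.
  - unfold constant_D_eq, open_interval; intros i Hi t Ht; simpl in Hi;
      inversion Hi; [ subst i; simpl in *; apply Hc; exact Ht | elim (Nat.nle_succ_0 _ H0) ].
Qed.

Definition const_step (u : R -> R) x y c (Hxy : x <= y)
  (Hc : forall t, x < t < y -> u t = c) : IsStepFun u x y :=
  existT _ (cons x (cons y nil)) (existT _ (cons c nil) (const_adapted u x y c Hxy Hc)).

Lemma const_step_int u x y c Hxy Hc :
  RiemannInt_SF (mkStepFun (const_step u x y c Hxy Hc)) = c * (y - x).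
Proof.
  unfold RiemannInt_SF; simpl. destruct (Rle_dec x y); [|lra].
  unfold subdivision_val, subdivision; simpl. ring.
Qed.

Fixpoint gsum (c : nat -> R) (h : R) (N : nat) : R :=
  match N with O => 0 | S n => gsum c h n + c n * h end.

Section Grid.
Variables (u : R -> R) (c : nat -> R) (a h : R).
Hypothesis hpos : 0 < h.
Hypothesis hc : forall k t, a + INR k * h < t < a + INR (S k) * h -> u t = c k.

Lemma grid_le k : a + INR k * h <= a + INR (S k) * h.
Proof. rewrite S_INR; nra. Qed.

Definition grid_step : forall N, IsStepFun u a (a + INR N * h).
Proof.
  induction N as [|N IH].
  - simpl. replace (a + 0 * h) with a by ring.
    apply (const_step u a a 0 (Rle_refl a)). intros; lra.
  - apply StepFun_P46 with (a + INR N * h); [exact IH|].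
    exact (const_step u _ _ (c N) (grid_le N) (hc N)).
Defined.

Lemma grid_int : forall N (pr : IsStepFun u a (a + INR N * h)),
  RiemannInt_SF (mkStepFun pr) = gsum c h N.
Proof.
  induction N as [|N IH]; intros pr.
  - simpl gsum. revert pr. replace (a + INR 0 * h) with a by (simpl; ring). intro pr.
    assert (E := StepFun_P43 pr pr pr). lra.
  - cbn [gsum]. rewrite <- (StepFun_P43 (grid_step N) (const_step u _ _ (c N) (grid_le N) (hc N)) pr).
    rewrite IH, const_step_int. rewrite S_INR. ring.
Qed.
End Grid.

Lemma Int_part_eq r k : IZR k <= r < IZR k + 1 -> Int_part r = k.
Proof.
  intros [H1 H2]. destruct (base_Int_part r) as [H3 H4].
  assert (A : (k < Int_part r + 1)%Z) by (apply lt_IZR; rewrite plus_IZR; simpl; lra).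
  assert (B : (Int_part r < k + 1)%Z) by (apply lt_IZR; rewrite plus_IZR; simpl; lra).
  lia.
Qed.

Lemma mono_step_approx (f : R -> R) a h N b :
  (forall x y, x <= y -> f y <= f x) -> 0 < h -> a + INR N * h = b ->
  {phi : StepFun a b & {psi : StepFun a b |
    (forall t, a <= t <= b -> Rabs (f t - phi t) <= psi t) /\
    RiemannInt_SF psi = (f a - f b) * h}}.
Proof.
  intros Hm hpos Hb. subst b.
  set (j := fun t => IZR (Int_part ((t - a) / h))).
  set (phi := fun t => f (a + j t * h)).
  set (psi := fun t => f (a + j t * h) - f (a + (j t + 1) * h)).
  assert (Hj : forall k t, a + INR k * h < t < a + INR (S k) * h -> j t = INR k).
  { intros k t Ht. unfold j. rewrite (Int_part_eq _ (Z.of_nat k)).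
    - now rewrite <- INR_IZR_INZ.
    - rewrite <- INR_IZR_INZ. rewrite S_INR in Ht. split.
      + apply Rmult_le_reg_r with h; auto. unfold Rdiv. rewrite Rmult_assoc, Rinv_l; lra.
      + apply Rmult_lt_reg_r with h; auto. unfold Rdiv. rewrite Rmult_assoc, Rinv_l; lra. }
  assert (Hphi : forall k t, a + INR k * h < t < a + INR (S k) * h -> phi t = f (a + INR k * h)).
  { intros k t Ht. unfold phi. rewrite (Hj k t Ht). reflexivity. }
  assert (Hpsi : forall k t, a + INR k * h < t < a + INR (S k) * h ->
     psi t = f (a + INR k * h) - f (a + INR (S k) * h)).
  { intros k t Ht. unfold psi. rewrite (Hj k t Ht), S_INR. reflexivity. }
  exists (mkStepFun (grid_step phi _ a h hpos Hphi N)).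
  exists (mkStepFun (grid_step psi _ a h hpos Hpsi N)).
  split.
  - intros t _. simpl. unfold phi, psi.
    destruct (base_Int_part ((t - a) / h)) as [B1 B2]. fold (j t) in B1, B2.
    assert (L1 : a + j t * h <= t).
    { apply Rle_trans with (a + ((t-a)/h) * h); [nra|]. unfold Rdiv.
      rewrite Rmult_assoc, Rinv_l; lra. }
    assert (L2 : t <= a + (j t + 1) * h).
    { apply Rle_trans with (a + ((t-a)/h) * h); [|nra]. unfold Rdiv.
      rewrite Rmult_assoc, Rinv_l; lra. }
    pose proof (Hm _ _ L1). pose proof (Hm _ _ L2).
    rewrite Rabs_left1; lra.
  - simpl. rewrite (grid_int _ _ _ _ hpos Hpsi). clear. induction N as [|N IH].
    + cbn [gsum INR]. rewrite Rmult_0_l, Rplus_0_r, Rminus_diag. ring.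
    + cbn [gsum]. rewrite IH. ring.
Qed.

Lemma mono_integrable (f : R -> R) a b :
  (forall x y, x <= y -> f y <= f x) -> a <= b -> Riemann_integrable f a b.
Proof.
  intros Hm Hab. destruct (Req_EM_T a b) as [E|E].
  { subst. apply RiemannInt_P7. }
  intro eps.
  set (D := (f a - f b) * (b - a)).
  assert (HD : 0 <= D) by (unfold D; pose proof (Hm a b Hab); nra).
  set (N := Z.to_nat (up (D / eps))).
  assert (HN : D / eps < INR N + 1).
  { unfold N. destruct (archimed (D/eps)) as [A1 _].
    destruct (Z_lt_le_dec (up (D/eps)) 0) as [z|z].
    - replace (Z.to_nat (up (D / eps))) with 0%nat by lia. simpl. apply IZR_lt in z.
      assert (0 <= D / eps) by (unfold Rdiv; pose proof (cond_pos eps);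
        apply Rmult_le_pos; [lra| left; apply Rinv_0_lt_compat; lra]). lra.
    - rewrite INR_IZR_INZ, Z2Nat.id by lia. lra. }
  set (h := (b - a) / (INR N + 1)).
  assert (Hh : 0 < h) by (unfold h; apply Rdiv_lt_0_compat; [lra|pose proof (pos_INR N); lra]).
  assert (Hb : a + INR (S N) * h = b).
  { unfold h. rewrite S_INR. field. pose proof (pos_INR N); lra. }
  destruct (mono_step_approx f a h (S N) b Hm Hh Hb) as [phi [psi [H1 H2]]].
  exists phi, psi. split.
  - intros t Ht. unfold Rmin, Rmax in Ht. destruct (Rle_dec a b); [|lra]. apply H1; lra.
  - rewrite H2. pose proof (Hm a b Hab). pose proof (cond_pos eps).
    rewrite Rabs_right by (apply Rle_ge, Rmult_le_pos; lra).
    unfold h. replace ((f a - f b) * ((b - a) / (INR N + 1))) with (D / (INR N + 1))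
      by (unfold D; field; pose proof (pos_INR N); lra).
    pose proof (pos_INR N).
    apply Rmult_lt_reg_r with (INR N + 1); [lra|].
    unfold Rdiv. rewrite Rmult_assoc, Rinv_l by lra.
    apply Rmult_lt_reg_r with (/ eps). apply Rinv_0_lt_compat; lra.
    rewrite Rmult_1_r. replace (eps * (INR N + 1) * / eps) with (INR N + 1) by (field; lra).
    exact HN.
Qed.

Lemma rpow_nonneg x y : 0 <= rpow x y.
Proof. unfold rpow; destruct (Rle_dec x 0); [lra|]. unfold Rpower. left; apply exp_pos. Qed.

Lemma rpow_pos x y : 0 < x -> rpow x y = Rpower x y.
Proof. intros; unfold rpow; destruct (Rle_dec x 0); [lra|auto]. Qed.

Lemma exp_le x y : x <= y -> exp x <= exp y.
Proof. intros [H|H]; [left; apply exp_increasing; auto| subst; lra]. Qed.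

Lemma ln_le0 x : 0 < x <= 1 -> ln x <= 0.
Proof. intros [H1 [H2|H2]]; [left; rewrite <- ln_1; apply ln_increasing; auto| subst; rewrite ln_1; lra]. Qed.

Lemma rpow_mono_exp x a b : 0 <= x <= 1 -> b <= a -> rpow x a <= rpow x b.
Proof.
  intros Hx Hab. unfold rpow; destruct (Rle_dec x 0); [lra|].
  unfold Rpower. apply exp_le. assert (ln x <= 0) by (apply ln_le0; lra). nra.
Qed.

Lemma rpow_mono_base x y a : 0 <= x <= y -> 0 <= a -> rpow x a <= rpow y a.
Proof.
  intros Hxy Ha. unfold rpow; destruct (Rle_dec x 0).
  - destruct (Rle_dec y 0); [lra|]. unfold Rpower; left; apply exp_pos.
  - destruct (Rle_dec y 0); [lra|]. apply Rle_Rpower_l; lra.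
Qed.

Lemma rpow_0 a : rpow 0 a = 0.
Proof. unfold rpow; destruct (Rle_dec 0 0); lra. Qed.

Lemma rpow_tends0 a : 0 < a -> forall eps, 0 < eps ->
  exists n0, forall n, (n0 <= n)%nat -> rpow (/ INR (S n)) a < eps.
Proof.
  intros Ha eps He.
  destruct (archimed (exp (- ln eps / a))) as [A1 _].
  exists (Z.to_nat (up (exp (- ln eps / a)))). intros n Hn.
  assert (HS : exp (- ln eps / a) < INR (S n)).
  { apply Rlt_le_trans with (IZR (up (exp (- ln eps / a)))); auto.
    destruct (Z_lt_le_dec (up (exp (- ln eps / a))) 0) as [z|z].
    - apply IZR_lt in z. pose proof (pos_INR (S n)). lra.
    - apply le_INR in Hn. rewrite INR_IZR_INZ, Z2Nat.id in Hn by lia.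
      rewrite S_INR. lra. }
  assert (P : 0 < INR (S n)) by (apply lt_0_INR; lia).
  rewrite rpow_pos by (apply Rinv_0_lt_compat; auto).
  unfold Rpower. rewrite ln_Rinv by auto.
  rewrite <- (exp_ln eps) by auto. apply exp_increasing.
  assert (- ln eps / a < ln (INR (S n))).
  { rewrite <- (ln_exp (- ln eps / a)). apply ln_increasing; auto. apply exp_pos. }
  apply Rmult_lt_compat_l with (r := a) in H; auto.
  replace (a * (- ln eps / a)) with (- ln eps) in H by (field; lra). nra.
Qed.

Section Dist.
Variable F : R -> R.
Hypothesis hF : nonneg_distribution_function F.

Lemma F_range z : 0 <= F z <= 1.
Proof.
  destruct hF as [Fm [Fr [Fn Fl]]]. split.
  - destruct (Rlt_le_dec z 0). rewrite Fn; lra.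
    rewrite <- (Fn (-1)) by lra. apply Fm; lra.
  - destruct (Rle_lt_dec (F z) 1) as [|Hz]; auto.
    destruct (Fl (F z - 1)) as [M HM]; [lra|].
    specialize (HM (Rmax M z) (Rmax_l _ _)).
    pose proof (Fm z (Rmax M z) (Rmax_r _ _)).
    rewrite Rabs_right in HM; lra.
Qed.

Variable xi : R -> R.
Hypothesis hxi : forall p, 0 <= p < 1 -> is_glb (fun z => 0 <= z /\ F z >= p) (xi p).

Lemma xi_props p : 0 <= p < 1 -> 0 <= xi p /\ F (xi p) >= p.
Proof.
  intros Hp. destruct hF as [Fm [Fr [Fn Fl]]]. destruct (hxi p Hp) as [G1 G2].
  assert (Ne : exists z, 0 <= z /\ F z >= p).
  { destruct (Fl (1 - p)) as [M HM]; [lra|]. exists (Rmax M 0). split; [apply Rmax_r|].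
    specialize (HM (Rmax M 0) (Rmax_l _ _)). apply Rabs_def2 in HM. lra. }
  assert (X0 : 0 <= xi p) by (apply G2; intros x [Hx _]; auto).
  split; auto.
  destruct (Rge_dec (F (xi p)) p) as [|Hlt]; auto. exfalso.
  destruct (Fr (xi p) (p - F (xi p))) as [d [Hd Hd2]]; [lra|].
  assert (xi p + d <= xi p).
  { apply G2. intros x [Hx Hfx]. pose proof (G1 x (conj Hx Hfx)).
    destruct (Rlt_le_dec x (xi p + d)) as [Hl|]; auto.
    specialize (Hd2 x (conj H Hl)). apply Rabs_def2 in Hd2. lra. }
  lra.
Qed.

Lemma xi_lt p z : 0 <= p < 1 -> 0 <= z -> z < xi p -> F z < p.
Proof.
  intros Hp Hz Hzx. destruct (hxi p Hp) as [G1 _].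
  destruct (Rlt_le_dec (F z) p) as [|Hle]; auto.
  assert (xi p <= z) by (apply G1; split; lra). lra.
Qed.

Lemma xi_mono p q : 0 <= p <= q -> q < 1 -> xi p <= xi q.
Proof.
  intros Hpq Hq. destruct (xi_props q) as [A B]; [lra|].
  destruct (hxi p) as [G1 _]; [lra|]. apply G1; split; lra.
Qed.

Lemma xi_0 : xi 0 = 0.
Proof.
  destruct (xi_props 0) as [A _]; [lra|]. destruct (hxi 0) as [G1 _]; [lra|].
  assert (xi 0 <= 0) by (apply G1; split; [lra|]; pose proof (F_range 0); lra). lra.
Qed.
End Dist.
From Coquelicot Require Import Coquelicot.
Open Scope R_scope.

Lemma RInt_le_c f a b c : a <= b -> ex_RInt f a b ->
  (forall x, a < x < b -> f x <= c) -> RInt f a b <= c * (b - a).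
Proof.
  intros Hab He Hf. apply Rle_trans with (RInt (fun _ => c) a b).
  - apply RInt_le; auto. apply ex_RInt_const.
  - rewrite RInt_const. unfold scal; simpl; unfold mult; simpl. lra.
Qed.

Lemma RInt_ge_c f a b c : a <= b -> ex_RInt f a b ->
  (forall x, a < x < b -> c <= f x) -> c * (b - a) <= RInt f a b.
Proof.
  intros Hab He Hf. apply Rle_trans with (RInt (fun _ => c) a b).
  - rewrite RInt_const. unfold scal; simpl; unfold mult; simpl. lra.
  - apply RInt_le; auto. apply ex_RInt_const.
Qed.

Lemma RInt_Ch f a b c : ex_RInt f a b -> ex_RInt f b c -> RInt f a c = RInt f a b + RInt f b c.
Proof. intros. rewrite <- (RInt_Chasles f a b c); auto. Qed.

Theorem mainTheorem2
  (F : R -> R) (xi : R -> R) (w : R -> R) (alpha H gamma : R)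
  (hF : nonneg_distribution_function F)
  (hxi : forall p, 0 <= p < 1 -> is_glb (fun z => 0 <= z /\ F z >= p) (xi p))
  (hw_cont : forall x, 0 <= x <= 1 -> continuity_pt w x)
  (hw_mono : forall x y, 0 <= x -> x <= y -> y <= 1 -> w x <= w y)
  (hw_range : forall x, 0 <= x <= 1 -> 0 <= w x <= 1)
  (hw0 : w 0 = 0) (hw1 : w 1 = 1)
  (halpha : 0 < alpha <= 1) (hH : 0 < H)
  (hw_holder : holder_01 w alpha H)
  (hgamma : 0 < gamma <= alpha)
  (hint : exists l, improper_integral_0_infty (fun z => rpow (1 - F z) gamma) l) :
  exists L,
    improper_integral_0_infty (fun z => w (1 - F z)) L /\
    Un_cv (fun n => quantile_sum xi w (S n)) L.
Proof.
  pose proof (F_range F hF) as Fr.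
  pose proof hF as [Fm _].
  set (g := fun z => w (1 - F z)).
  assert (Hgm : forall x y, x <= y -> g y <= g x).
  { intros x y Hxy. unfold g. pose proof (Fm x y Hxy). pose proof (Fr x); pose proof (Fr y).
    apply hw_mono; lra. }
  assert (Hg01 : forall z, 0 <= g z <= 1) by (intros z; unfold g; apply hw_range; pose proof (Fr z); lra).
  assert (Hgex : forall a b, ex_RInt g a b).
  { intros a b. destruct (Rle_dec a b).
    - apply ex_RInt_Reals_1, mono_integrable; auto.
    - apply ex_RInt_swap, ex_RInt_Reals_1, mono_integrable; auto; lra. }
  destruct hint as [l [I [HI1 HI2]]].
  set (h := fun z => rpow (1 - F z) gamma).
  assert (Hh0 : forall z, 0 <= h z) by (intros; apply rpow_nonneg).
  assert (Hhex : forall b, 0 <= b -> ex_RInt h 0 b).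
  { intros b Hb. destruct (HI1 b Hb) as [pr _]. exact (ex_RInt_Reals_1 _ _ _ pr). }
  assert (HhI : forall b, 0 <= b -> RInt h 0 b = I b).
  { intros b Hb. destruct (HI1 b Hb) as [pr Hpr]. rewrite <- Hpr. apply RInt_Reals. }
  assert (Hhex2 : forall c d, 0 <= c <= d -> ex_RInt h c d).
  { intros c d Hcd. apply (ex_RInt_Chasles_2 (V := R_CompleteNormedModule) h 0 c d); [lra|]. apply Hhex; lra. }
  assert (Hhch : forall c d, 0 <= c <= d -> RInt h 0 d = RInt h 0 c + RInt h c d).
  { intros c d Hcd. apply RInt_Ch; [apply Hhex|apply Hhex2]; lra. }
  assert (Hhpos : forall c d, 0 <= c <= d -> 0 <= RInt h c d).
  { intros c d Hcd. apply RInt_ge_0; [lra|apply Hhex2; lra|intros; apply Hh0]. }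
  assert (Hhl : forall c, 0 <= c -> RInt h 0 c <= l).
  { intros c Hc. destruct (Rle_dec (RInt h 0 c) l) as [|Hn]; auto. exfalso.
    destruct (HI2 (RInt h 0 c - l)) as [M HM]; [lra|].
    specialize (HM (Rmax M c) (Rmax_l _ _)).
    rewrite <- HhI in HM by (pose proof (Rmax_r M c); lra).
    rewrite (Hhch c (Rmax M c)) in HM by (pose proof (Rmax_r M c); lra).
    pose proof (Hhpos c (Rmax M c)). pose proof (Rmax_r M c).
    apply Rabs_def2 in HM. lra. }
  set (T := fun c => l - RInt h 0 c).
  assert (HT3 : forall c d, 0 <= c <= d -> RInt h c d <= T c).
  { intros c d Hcd. unfold T. pose proof (Hhl d). rewrite (Hhch c d) in H0; lra. }
  assert (HTm : forall c d, 0 <= c <= d -> T d <= T c).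
  { intros c d Hcd. unfold T. rewrite (Hhch c d) by lra. pose proof (Hhpos c d Hcd). lra. }
  assert (HT0 : forall c, 0 <= c -> 0 <= T c) by (intros c Hc; unfold T; pose proof (Hhl c Hc); lra).
  assert (HT4 : forall e, 0 < e -> exists M, 0 <= M /\ T M < e).
  { intros e He. destruct (HI2 e He) as [M HM]. exists (Rmax M 0). split; [apply Rmax_r|].
    specialize (HM _ (Rmax_l M 0)). unfold T. rewrite HhI by apply Rmax_r.
    apply Rabs_def2 in HM. lra. }
  assert (Hw_le : forall x, 0 <= x <= 1 -> w x <= H * rpow x alpha).
  { intros x Hx. pose proof (hw_holder x 0 Hx ltac:(lra)). rewrite hw0 in H0.
    rewrite Rminus_0_r, Rminus_0_r, Rabs_right in H0 by (pose proof (hw_range x Hx); lra).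
    rewrite Rabs_right in H0 by lra. auto. }
  assert (Hw_diff : forall x y, 0 <= y <= x -> x <= 1 -> w x - w y <= H * rpow (x - y) alpha).
  { intros x y Hxy Hx1. pose proof (hw_holder x y ltac:(lra) ltac:(lra)).
    rewrite (Rabs_right (x - y)) in H0 by lra.
    apply Rle_trans with (Rabs (w x - w y)); auto. apply Rle_abs. }
  assert (Hgh : forall z, g z <= H * h z).
  { intros z. unfold g, h. pose proof (Fr z).
    apply Rle_trans with (H * rpow (1 - F z) alpha); [apply Hw_le; lra|].
    apply Rmult_le_compat_l; [lra|]. apply rpow_mono_exp; lra. }
  assert (Hgmono : forall c d, 0 <= c <= d -> RInt g 0 c <= RInt g 0 d).
  { intros c d Hcd. rewrite (RInt_Ch g 0 c d) by apply Hgex.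
    assert (0 <= RInt g c d) by (apply RInt_ge_0; [lra|apply Hgex|intros; apply Hg01]). lra. }
  assert (Hgh_int : forall c d, 0 <= c <= d -> RInt g c d <= H * RInt h c d).
  { intros c d Hcd.
    assert (E : ex_RInt (fun z => H * h z) c d) by exact (ex_RInt_scal h c d H (Hhex2 c d Hcd)).
    apply Rle_trans with (RInt (fun z => H * h z) c d).
    - apply RInt_le; [lra|apply Hgex|exact E|intros; apply Hgh].
    - right. exact (RInt_scal h c d H (Hhex2 c d Hcd)). }
  assert (HgB : forall b, 0 <= b -> RInt g 0 b <= H * l).
  { intros b Hb. apply Rle_trans with (H * RInt h 0 b). apply Hgh_int; lra.
    apply Rmult_le_compat_l; [lra|]. apply Hhl; auto. }
  set (E := fun y => exists b, 0 <= b /\ y = RInt g 0 b).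
  destruct (completeness E) as [L [HL1 HL2]].
  { exists (H * l). intros y [b [Hb ->]]. apply HgB; auto. }
  { exists (RInt g 0 0). exists 0. split; auto; lra. }
  assert (HLub : forall b, 0 <= b -> RInt g 0 b <= L) by (intros b Hb; apply HL1; exists b; auto).
  exists L. split.
  { exists (fun b => RInt g 0 b). split.
    - intros b Hb. exists (mono_integrable g 0 b Hgm Hb). symmetry; apply RInt_Reals.
    - intros eps He.
      destruct (classic (exists b, 0 <= b /\ L - eps < RInt g 0 b)) as [[b [Hb Hlt]]|Hno].
      + exists b. intros b' Hb'. pose proof (Hgmono b b' ltac:(lra)). pose proof (HLub b' ltac:(lra)).
        rewrite Rabs_left1 by lra. lra.
      + exfalso. assert (L <= L - eps); [|lra]. apply HL2. intros y [b [Hb ->]].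
        destruct (Rle_dec (RInt g 0 b) (L - eps)); auto. exfalso; apply Hno; exists b; split; auto; lra. }
  assert (Hfin : forall n, quantile_sum xi w (S n) <= RInt g 0 (xi (INR n / INR (S n))) <=
     quantile_sum xi w (S n) + H * rpow (/ INR (S n)) alpha * xi (INR n / INR (S n))).
  { intros n.
    set (NN := S n).
    assert (HNN : 0 < INR NN) by (apply lt_0_INR; unfold NN; lia).
    set (xk := fun k => xi (INR k / INR NN)).
    set (v := fun k => w (1 - INR k / INR NN)).
    set (eN := H * rpow (/ INR NN) alpha).
    assert (Hp : forall k, (k <= n)%nat -> 0 <= INR k / INR NN < 1).
    { intros k Hk. split. apply Rdiv_le_0_compat; [apply pos_INR|auto].
      apply Rmult_lt_reg_r with (INR NN); auto. unfold Rdiv. rewrite Rmult_assoc, Rinv_l by lra.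
      rewrite Rmult_1_l, Rmult_1_r. apply lt_INR. unfold NN; lia. }
    assert (Hx : forall k, (k <= n)%nat -> 0 <= xk k /\ F (xk k) >= INR k / INR NN).
    { intros k Hk. apply (xi_props F hF xi hxi). auto. }
    assert (Hxm : forall k, (k < n)%nat -> xk k <= xk (S k)).
    { intros k Hk. apply (xi_mono F hF xi hxi).
      - split; [apply Hp; lia|]. unfold Rdiv. apply Rmult_le_compat_r.
        left; apply Rinv_0_lt_compat; auto. apply le_INR; lia.
      - apply Hp; lia. }
    assert (Hx0 : xk 0%nat = 0).
    { unfold xk. replace (INR 0 / INR NN) with 0 by (change (INR 0) with 0; unfold Rdiv; ring). apply (xi_0 F hF xi hxi). }
    assert (Hv : forall k, (k < NN)%nat -> v k - v (S k) <= eN).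
    { intros k Hk. unfold v, eN.
      assert (E1 : 1 - INR k / INR NN - (1 - INR (S k) / INR NN) = / INR NN) by (rewrite S_INR; field; lra).
      rewrite <- E1. apply Hw_diff.
      - split.
        + assert (INR (S k) <= INR NN) by (apply le_INR; lia).
          assert (INR (S k) / INR NN <= 1). { apply Rmult_le_reg_r with (INR NN); auto.
            unfold Rdiv. rewrite Rmult_assoc, Rinv_l by lra. lra. } lra.
        + rewrite S_INR. unfold Rdiv. rewrite Rmult_plus_distr_r.
          pose proof (Rinv_0_lt_compat _ HNN). lra.
      - pose proof (pos_INR k). assert (0 <= INR k / INR NN) by (apply Rdiv_le_0_compat; auto). lra. }
    assert (Hpiece : forall k, (k < n)%nat ->
      (xk (S k) - xk k) * v (S k) <= RInt g (xk k) (xk (S k)) <= (xk (S k) - xk k) * (v (S k) + eN)).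
    { intros k Hk. destruct (Hx k ltac:(lia)) as [Hxk HFk]. pose proof (Hxm k Hk).
      pose proof (Hv k ltac:(unfold NN; lia)). split.
      - rewrite Rmult_comm. apply RInt_ge_c; auto. intros z Hz. unfold g, v.
        assert (F z < INR (S k) / INR NN) by (apply (xi_lt F xi hxi); [apply Hp; lia|lra|apply Hz]).
        pose proof (Fr z). destruct (Hp (S k) ltac:(lia)).
        apply hw_mono; lra.
      - rewrite Rmult_comm. apply RInt_le_c; auto. intros z Hz.
        apply Rle_trans with (v k); [|lra]. unfold g, v.
        pose proof (Fm (xk k) z ltac:(lra)). pose proof (Fr z). destruct (Hp k ltac:(lia)).
        apply hw_mono; lra. }
    assert (Hind : forall k, (k <= n)%nat ->
      sum_f_R0 (fun i => xk i * (v i - v (S i))) k + xk k * v (S k) <= RInt g 0 (xk k) <=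
      sum_f_R0 (fun i => xk i * (v i - v (S i))) k + xk k * v (S k) + eN * xk k).
    { induction k as [|k IH]; intros Hk.
      - simpl. rewrite Hx0, RInt_point. unfold zero; simpl. lra.
      - specialize (IH ltac:(lia)). rewrite tech5.
        rewrite (RInt_Ch g 0 (xk k) (xk (S k))) by apply Hgex.
        destruct (Hpiece k ltac:(lia)). pose proof (Hx k ltac:(lia)). lra. }
    specialize (Hind n (Nat.le_refl n)).
    assert (HvN : v (S n) = 0).
    { unfold v. change (S n) with NN. replace (1 - INR NN / INR NN) with 0 by (field; lra). auto. }
    rewrite HvN, Rmult_0_r, Rplus_0_r in Hind.
    assert (Hq : quantile_sum xi w NN = sum_f_R0 (fun i => xk i * (v i - v (S i))) n).
    { unfold quantile_sum. replace (NN - 1)%nat with n by (unfold NN; lia). apply sum_eq. intros i Hi.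
      unfold xk, v. fold NN. f_equal. f_equal; f_equal.
      - rewrite minus_INR by (unfold NN; lia). field; lra.
      - replace (NN - i - 1)%nat with (NN - S i)%nat by lia.
        rewrite minus_INR by (unfold NN; lia). field; lra. }
    rewrite Hq. exact Hind. }
  assert (Hbound : forall n M, 0 <= M ->
    let eN := H * rpow (/ INR (S n)) alpha in
    0 <= L - quantile_sum xi w (S n) <= 3 * M * eN + 3 * H * T M).
  { intros n M HM eN.
    set (NN := S n).
    assert (HNN : 0 < INR NN) by (apply lt_0_INR; unfold NN; lia).
    set (xx := xi (INR n / INR NN)).
    assert (Hp : 0 <= INR n / INR NN < 1).
    { split. apply Rdiv_le_0_compat; [apply pos_INR|auto].
      apply Rmult_lt_reg_r with (INR NN); auto. unfold Rdiv. rewrite Rmult_assoc, Rinv_l by lra.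
      rewrite Rmult_1_l, Rmult_1_r. apply lt_INR. unfold NN; lia. }
    assert (E1 : 1 - INR n / INR NN = / INR NN) by (unfold NN; rewrite S_INR; field; rewrite <- S_INR; apply not_0_INR; lia).
    destruct (xi_props F hF xi hxi _ Hp) as [Hx0 HFx]. fold xx in Hx0, HFx.
    assert (HeN0 : 0 <= eN) by (unfold eN; pose proof (rpow_nonneg (/ INR (S n)) alpha); nra).
    pose proof (Hfin n) as [F1 F2]. fold NN xx in F1, F2. fold eN in F2.
    pose proof (HLub xx Hx0).
    assert (Hg5 : forall z, xx <= z -> g z <= eN).
    { intros z Hz. unfold g, eN. pose proof (Fm _ _ Hz). pose proof (Fr z).
      apply Rle_trans with (H * rpow (1 - F z) alpha); [apply Hw_le; lra|].
      apply Rmult_le_compat_l; [lra|]. apply rpow_mono_base; [|lra]. fold NN. lra. }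
    assert (Htail : L <= RInt g 0 xx + (eN * M + H * T M)).
    { apply HL2. intros y [b [Hb ->]].
      assert (0 <= H * T M) by (pose proof (HT0 M HM); nra).
      destruct (Rle_dec b xx).
      - pose proof (Hgmono b xx ltac:(lra)). nra.
      - rewrite (RInt_Ch g 0 xx b) by apply Hgex. apply Rplus_le_compat_l.
        set (y := Rmax xx M).
        destruct (Rle_dec b y).
        + apply Rle_trans with (eN * (b - xx)).
          * apply RInt_le_c; [lra|apply Hgex|]. intros; apply Hg5; lra.
          * assert (b - xx <= M) by (unfold y, Rmax in *; destruct (Rle_dec xx M); lra). nra.
        + assert (Hy1 : xx <= y) by apply Rmax_l. assert (Hy2 : M <= y) by apply Rmax_r.
          rewrite (RInt_Ch g xx y b) by apply Hgex. apply Rplus_le_compat.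
          * apply Rle_trans with (eN * (y - xx)).
            -- apply RInt_le_c; [lra|apply Hgex|]. intros; apply Hg5; lra.
            -- assert (y - xx <= M) by (unfold y, Rmax in *; destruct (Rle_dec xx M); lra). nra.
          * apply Rle_trans with (H * RInt h y b). apply Hgh_int; lra.
            apply Rmult_le_compat_l; [lra|]. apply Rle_trans with (T y). apply HT3; lra.
            apply HTm; lra. }
    assert (Hg6 : eN * xx <= 2 * H * T M + 2 * M * eN).
    { assert (0 <= H * T M) by (pose proof (HT0 M HM); nra).
      destruct (Rle_dec xx (2 * M)). nra.
      assert (Hr : rpow (/ INR NN) gamma * (xx / 2) <= RInt h (xx / 2) xx).
      { replace (xx / 2) with (xx - xx / 2) at 1 by field.
        apply RInt_ge_c; [lra|apply Hhex2; lra|]. intros z Hz. unfold h.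
        assert (F z < INR n / INR NN). { apply (xi_lt F xi hxi); auto; fold xx; lra. }
        apply rpow_mono_base; [|lra]. pose proof (Rinv_0_lt_compat _ HNN). lra. }
      pose proof (HT3 (xx/2) xx ltac:(lra)). pose proof (HTm M (xx/2) ltac:(lra)).
      assert (eN <= H * rpow (/ INR NN) gamma).
      { unfold eN. apply Rmult_le_compat_l; [lra|]. apply rpow_mono_exp; [|lra].
        split. left; apply Rinv_0_lt_compat; auto. rewrite <- Rinv_1. apply Rinv_le_contravar; [lra|].
        unfold NN; rewrite S_INR; pose proof (pos_INR n); lra. }
      pose proof (rpow_nonneg (/ INR NN) gamma).
      assert (eN * xx <= H * rpow (/ INR NN) gamma * xx) by (apply Rmult_le_compat_r; lra).
      assert (H * rpow (/ INR NN) gamma * xx = 2 * H * (rpow (/ INR NN) gamma * (xx / 2))) by field.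
      assert (2 * H * (rpow (/ INR NN) gamma * (xx / 2)) <= 2 * H * T M) by (apply Rmult_le_compat_l; lra).
      assert (0 <= M * eN) by (apply Rmult_le_pos; lra). lra. }
    assert (eN * xx = H * rpow (/ INR NN) alpha * xx) by reflexivity.
    lra. }
  intros eps He.
  destruct (HT4 (eps / (6 * H))) as [M [HM HTM]]. apply Rdiv_lt_0_compat; lra.
  destruct (rpow_tends0 alpha ltac:(lra) (eps / (6 * H * (M + 1)))) as [n0 Hn0].
  { apply Rdiv_lt_0_compat; [lra|]. nra. }
  exists n0. intros n Hn. unfold R_dist.
  destruct (Hbound n M HM) as [B1 B2].
  specialize (Hn0 n Hn).
  rewrite Rabs_minus_sym, Rabs_right by lra.
  assert (3 * H * T M < eps / 2).
  { apply Rmult_lt_compat_l with (r := 3 * H) in HTM; [|lra].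
    replace (3 * H * (eps / (6 * H))) with (eps / 2) in HTM by (field; lra). lra. }
  assert (3 * M * (H * rpow (/ INR (S n)) alpha) < eps / 2).
  { apply Rle_lt_trans with (3 * (M + 1) * H * rpow (/ INR (S n)) alpha).
    pose proof (rpow_nonneg (/ INR (S n)) alpha). nra.
    apply Rmult_lt_compat_l with (r := 3 * (M + 1) * H) in Hn0; [|nra].
    replace (3 * (M + 1) * H * (eps / (6 * H * (M + 1)))) with (eps / 2) in Hn0 by (field; lra). lra. }
  lra.
Qed.
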